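(* Let $d,d'\in\mathbb{N}$, let $U\subseteq\mathbb{R}^{d+d'}$ and $W\subseteq\mathbb{R}^d$ be measurable sets, and let $(\mathbf g(w))_{w\in W}$ be an $\mathbb{R}^{d'}$-valued Lipschitz-continuous stochastic process. Suppose that for some constants $C,\rho\in(0,\infty)$ one has for every $(w,v)\in U\cap(W\times\mathbb{R}^{d'})$ that the distribution of $\mathbf g(w)$ restricted to the ball $B_{\mathbb{R}^{d'}}(v,\rho)$ is absolutely continuous with respect to Lebesgue measure with density bounded by $C$. If $\mathcal{H}_{d'}(U)=0$, then \[ \mathbb{P}\bigl(\exists\,w\in W:\ (w,\mathbf g(w))\in U\bigr)=0. \]
   Context: $\mathcal{H}_{d'}$ denotes the $d'$-dimensional Hausdorff measure on $\mathbb{R}^{d+d'}$. *)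

(* Defs.v *)
From HB Require Import structures.
From mathcomp Require Import all_boot all_order all_algebra.
From mathcomp Require Import all_classical all_reals all_analysis.
Set Implicit Arguments. Unset Strict Implicit. Unset Printing Implicit Defensive.
Import Order.TTheory GRing.Theory Num.Theory.
Import numFieldNormedType.Exports.
Local Open Scope classical_set_scope.
Local Open Scope ring_scope.

(* R^n is modelled as n.-tuple R, equipped with the product (= Borel)
   sigma-algebra of the library (measure_tuple_display). *)

Section Defs.
Variable R : realType.

Definition eucl_dist (n : nat) (x y : n.-tuple R) : R :=
  Num.sqrt (\sum_(i < n) (tnth x i - tnth y i) ^+ 2).

Definition eucl_ball (n : nat) (v : n.-tuple R) (r : R) : set (n.-tuple R) :=
  [set x | eucl_dist x v < r].

(* n-fold iterated Lebesgue integral on R^n; by Tonelli this is the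
   integral against n-dimensional Lebesgue measure for nonnegative
   measurable integrands. *)
Fixpoint iter_lebesgue_integral (n : nat) : (n.-tuple R -> \bar R) -> \bar R :=
  match n with
  | 0 => fun h => h [tuple]
  | k.+1 => fun h =>
      (\int[@lebesgue_measure R]_(x in [set: R])
          iter_lebesgue_integral (fun t : k.-tuple R => h (cons_tuple x t)))%E
  end.

Definition eucl_diam (n : nat) (E : set (n.-tuple R)) : \bar R :=
  ereal_sup ([set (eucl_dist x y)%:E | x in E & y in E] `|` [set 0%E]).

(* s-dimensional Hausdorff measure (without normalising constant) :
   H^s(A) = sup_{delta>0} inf { sum_i diam(E_i)^s : A ⊆ U_i E_i, diam E_i <= delta },
   with the convention that empty sets contribute 0. *)
Definition hausdorff_pre (n s : nat) (delta : R) (A : set (n.-tuple R)) : \bar R :=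
  ereal_inf [set (\sum_(0 <= i <oo)
                    (if E i == set0 then 0 else (eucl_diam (E i)) ^+ s))%E
            | E in [set E : nat -> set (n.-tuple R) |
                     A `<=` \bigcup_i E i /\ (forall i, (eucl_diam (E i) <= delta%:E)%E)]].

Definition hausdorff_measure (n s : nat) (A : set (n.-tuple R)) : \bar R :=
  ereal_sup [set hausdorff_pre s delta A | delta in [set delta : R | 0 < delta]].

End Defs.

(* Main.v *)
Require Import Defs.
From HB Require Import structures.
From mathcomp Require Import all_boot all_order all_algebra.
From mathcomp Require Import all_classical all_reals all_analysis.
From mathcomp Require Import ring lra.
Set Implicit Arguments. Unset Strict Implicit.
Import Order.TTheory GRing.Theory Num.Theory.
Import numFieldNormedType.Exports.
Local Open Scope classical_set_scope.
Local Open Scope ring_scope.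

Section H.
Variable R : realType.
Local Open Scope ereal_scope.

Lemma le_int_nonneg d (T : measurableType d) (mu : {measure set T -> \bar R})
  (f1 f2 : T -> \bar R) : (forall x, 0 <= f1 x) -> (forall x, f1 x <= f2 x) ->
  \int[mu]_(x in setT) f1 x <= \int[mu]_(x in setT) f2 x.
Proof.
move=> f10 f12.
have f20 x : 0 <= f2 x by apply: le_trans (f12 x).
rewrite !ge0_integralE// !patch_setT.
apply: ge_ereal_sup => _ [h hf <-]; apply: ereal_sup_ubound; exists h => //.
by move=> x; apply: le_trans (f12 x).
Qed.

Lemma iter_ge0 n (h : n.-tuple R -> \bar R) : (forall x, 0 <= h x) ->
  0 <= iter_lebesgue_integral h.
Proof.
elim: n h => [|n IH] h h0 /=; first exact: h0.
by apply: integral_ge0 => x _; apply: IH.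
Qed.

Lemma iter_bound n (h : n.-tuple R -> \bar R) (v : n.-tuple R) (c s : R) :
  (0 <= c)%R -> (0 <= s)%R -> (forall x, 0 <= h x) ->
  (forall x, h x <= (if [forall i, `|tnth x i - tnth v i| <= s] then c else 0)%:E) ->
  iter_lebesgue_integral h <= (c * (2 * s) ^+ n)%:E.
Proof.
elim: n h v c => [|n IH] h v c c0 s0 h0 hb /=.
  by apply: le_trans (hb _) _; rewrite expr0 mulr1; case: ifP => _; rewrite lee_fin.
set c' := (c * (2 * s) ^+ n)%R.
have c'0 : (0 <= c')%R by rewrite /c' mulr_ge0 // exprn_ge0 // mulr_ge0.
pose I := `[(tnth v ord0 - s)%R, (tnth v ord0 + s)%R]%classic.
apply: (@le_trans _ _ (\int[@lebesgue_measure R]_(x in [set: R]) (c' * \1_I x)%:E)).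
  apply: (@le_int_nonneg _ _ (@lebesgue_measure R)) => [x|x]; first by apply: iter_ge0 => t.
  pose cx := (if `|x - tnth v ord0| <= s then c else 0)%R.
  have cx0 : (0 <= cx)%R by rewrite /cx; case: ifP.
  apply: (@le_trans _ _ (cx * (2 * s) ^+ n)%:E).
    apply: (IH _ [tuple of behead v]) => // t.
    apply: le_trans (hb _) _.
    rewrite /cx; case: ifP => H1; last first.
      by case: ifP => _; [case: ifP => _|]; rewrite lee_fin.
    move/forallP: H1 => H1.
    have Hv i : tnth v (lift ord0 i) = tnth [tuple of behead v] i.
      by rewrite [in LHS](tuple_eta v) tnthS.
    have -> : [forall i, `|tnth t i - tnth [tuple of behead v] i| <= s]%R = true.
      apply/forallP => i; move: (H1 (lift ord0 i)).
      by rewrite tnthS Hv.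
    have -> // : (`|x - tnth v ord0| <= s)%R = true.
    by move: (H1 ord0).
  rewrite /cx /I /c' indicE; case: ifP => H.
    by rewrite mem_set ?mulr1 //= in_itv /= -ler_distl.
  by rewrite mul0r lee_fin; apply: mulr_ge0 c'0 (ler0n _ _).
have := @integralZl_indic _ _ _ (@lebesgue_measure R) setT measurableT (fun _ => I) c'.
move=> /= ->; last 2 first.
- by move=> /lt_geF; rewrite c'0.
- exact: measurable_itv.
rewrite integral_indic //; last exact: measurable_itv.
rewrite [X in _ * lebesgue_measure X](_ : _ = I); last exact: setIT.
rewrite lebesgue_measure_itv /=.
rewrite lte_fin; case: ltP => H.
  rewrite -EFinB -EFinM lee_fin /c' exprS.
  rewrite (_ : tnth v ord0 + s - (tnth v ord0 - s) = 2 * s)%R; last by ring.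
  by rewrite [leLHS](_ : _ = c * (2 * s * (2 * s) ^+ n))%R //; ring.

by rewrite mule0 lee_fin mulr_ge0 // exprn_ge0 // mulr_ge0.
Qed.
End H.
Section H2.
Variable R : realType.

Lemma dist_ge0 n (x y : n.-tuple R) : 0 <= eucl_dist x y.
Proof. exact: sqrtr_ge0. Qed.

Lemma dist_sym n (x y : n.-tuple R) : eucl_dist x y = eucl_dist y x.
Proof.
rewrite /eucl_dist; congr Num.sqrt; apply: eq_bigr => i _.
by rewrite -opprB sqrrN.
Qed.

Lemma coord_le_dist n (x y : n.-tuple R) i :
  `|tnth x i - tnth y i| <= eucl_dist x y.
Proof.
rewrite /eucl_dist -sqrtr_sqr ler_sqrt; last first.
  by apply: sumr_ge0 => j _; exact: sqr_ge0.
rewrite (bigD1 i) //= lerDl; apply: sumr_ge0 => j _; exact: sqr_ge0.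
Qed.

Lemma dist_cat_l m n (w w' : m.-tuple R) (v v' : n.-tuple R) :
  eucl_dist w w' <= eucl_dist (cat_tuple w v) (cat_tuple w' v').
Proof.
rewrite /eucl_dist ler_sqrt; last by apply: sumr_ge0 => j _; exact: sqr_ge0.
rewrite big_split_ord /=.
under [X in _ <= X + _]eq_bigr do rewrite !tnth_lshift.
rewrite lerDl; apply: sumr_ge0 => j _; exact: sqr_ge0.
Qed.

Lemma dist_cat_r m n (w w' : m.-tuple R) (v v' : n.-tuple R) :
  eucl_dist v v' <= eucl_dist (cat_tuple w v) (cat_tuple w' v').
Proof.
rewrite /eucl_dist ler_sqrt; last by apply: sumr_ge0 => j _; exact: sqr_ge0.
rewrite big_split_ord /=.
under [X in _ <= _ + X]eq_bigr do rewrite !tnth_rshift.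
rewrite lerDr; apply: sumr_ge0 => j _; exact: sqr_ge0.
Qed.

Lemma box_in_ball n (v x : n.-tuple R) (s rho : R) : 0 < rho -> 0 <= s ->
  n%:R * s ^+ 2 < rho ^+ 2 ->
  (forall j, `|tnth x j - tnth v j| <= s) -> eucl_ball v rho x.
Proof.
move=> rho0 s0 H Hx; rewrite /eucl_ball /= /eucl_dist.
rewrite -(ger0_norm (ltW rho0)) -sqrtr_sqr ltr_sqrt ?exprn_gt0 //.
apply: le_lt_trans H.
rewrite mulr_natl -[X in _ *+ X]card_ord -sumr_const.
apply: ler_sum => j _.
rewrite -real_normK ?num_real //.
by apply: lerXn2r; rewrite ?nnegrE //; exact: Hx.
Qed.
End H2.
Section H3.
Variable R : realType.

Definition tbox n (v : n.-tuple R) (s : R) : set (n.-tuple R) :=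
  [set x | forall j, `|tnth x j - tnth v j| <= s].

Lemma measurable_tbox n (v : n.-tuple R) s : measurable (tbox v s).
Proof.
have -> : tbox v s = \bigcap_(j in [set: 'I_n])
    (setT `&` ((fun x : n.-tuple R => tnth x j) @^-1` `[tnth v j - s, tnth v j + s]%classic)).
  apply/seteqP; split => x /=.
    move=> Hx j _; split => //=; rewrite in_itv /= -ler_distl; exact: Hx.
  by move=> Hx j; have [_ /=] := Hx j I; rewrite in_itv /= -ler_distl.
apply: fin_bigcap_measurable; first exact: finite_finset.
move=> j _; apply: measurable_tnth => //; exact: measurable_itv.
Qed.

Local Open Scope ereal_scope.
Lemma diam_ge0 n (E : set (n.-tuple R)) : 0 <= eucl_diam E.
Proof. by apply: ereal_sup_ubound; right. Qed.

Lemma dist_le_diam n (E : set (n.-tuple R)) x y : E x -> E y ->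
  (eucl_dist x y)%:E <= eucl_diam E.
Proof. by move=> Ex Ey; apply: ereal_sup_ubound; left; exists x => //; exists y. Qed.
End H3.

Section Main.
Variable R : realType.
Local Open Scope ereal_scope.

Lemma negl_of_eps d (T : measurableType d) (P : probability T R) (A : set T) :
  (forall e : R, (0 < e)%R -> exists N, measurable N /\ A `<=` N /\ P N <= e%:E) ->
  P.-negligible A.
Proof.
move=> H.
have H' : forall n : nat, exists N, measurable N /\ A `<=` N /\ P N <= (n.+1%:R^-1)%:E.
  by move=> n; apply: H; rewrite invr_gt0.
have [N HN] := choice H'.
exists (\bigcap_n N n); split.
- by apply: bigcapT_measurable => n; case: (HN n).
- have mM : measurable (\bigcap_n N n) by apply: bigcapT_measurable => n; case: (HN n).
  have Hle n : P (\bigcap_n N n) <= (n.+1%:R^-1)%:E.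
    case: (HN n) => mN [_ HPN]; apply: le_trans HPN.
    by apply: le_measure; rewrite ?inE //; apply: bigcap_inf.
  have P0 : 0 <= P (\bigcap_n N n) by [].
  have Pfin : P (\bigcap_n N n) \is a fin_num.
    rewrite ge0_fin_numE //; apply: le_lt_trans (Hle 0%N) _; exact: ltry.
  rewrite -(fineK Pfin) in Hle P0 *; move: (fine _) Hle P0 => r Hle P0.
  rewrite lee_fin in P0; apply/eqP; rewrite eqe; rewrite eq_le P0 andbT.
  rewrite leNgt; apply/negP => r0.
  have [n n1e] : exists n, (n.+1%:R^-1 < r)%R.
    exists (Num.truncn r^-1).
    by rewrite -ltf_pV2 ?(posrE,divr_gt0)// ?invrK ?Num.Theory.truncnS_gt // posrE invr_gt0.
  by move: (Hle n); rewrite lee_fin leNgt n1e.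
- by move=> x Ax n _; case: (HN n) => _ [/(_ x Ax)].
Qed.
End Main.

Section Key.
Variable R : realType.
Local Open Scope ereal_scope.

Lemma key (dT : measure_display) (T : measurableType dT)
  (P : probability T R) (d d' : nat)
  (U : set ((d + d').-tuple R)) (W : set (d.-tuple R))
  (g : d.-tuple R -> T -> d'.-tuple R) (C rho : R) (K : nat) :
  (forall w, W w -> measurable_fun [set: T] (g w)) ->
  (0 < C)%R -> (0 < rho)%R ->
  (forall w v, W w -> U (cat_tuple w v) ->
     exists f : d'.-tuple R -> R,
       measurable_fun [set: d'.-tuple R] f /\
       (forall x, (0 <= f x <= C)%R) /\
       (forall A : set (d'.-tuple R), measurable A -> A `<=` eucl_ball v rho ->
          P (g w @^-1` A) =
          iter_lebesgue_integral (fun x => (\1_A x * f x)%:E))) ->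
  hausdorff_measure d' U = 0%E ->
  P.-negligible [set omega | exists w, W w /\ U (cat_tuple w (g w omega)) /\
     forall w1 w2, W w1 -> W w2 ->
       (eucl_dist (g w1 omega) (g w2 omega) <= K%:R * eucl_dist w1 w2)%R].
Proof.
move=> mg C0 rho0 dens HU.
apply: negl_of_eps => e e0.
set c' := (C * (2 * (K%:R + 1)) ^+ d')%R.
have c'0 : (0 < c')%R by rewrite mulr_gt0 // exprn_gt0 // mulr_gt0 // ltr_wpDl.
set s0 := (rho / (d'%:R + 1))%R.
have s00 : (0 < s0)%R by rewrite divr_gt0 // ltr_wpDl.
set delta := (s0 / (K%:R + 1))%R.
have delta0 : (0 < delta)%R by rewrite divr_gt0 // ltr_wpDl.
have Hpre : hausdorff_pre d' delta U <= 0.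
  by rewrite -HU; apply: ereal_sup_ubound; exists delta.
have : hausdorff_pre d' delta U < (e / c')%:E.
  by apply: le_lt_trans Hpre _; rewrite lte_fin divr_gt0.
move=> /ereal_inf_lt [_ [E [Ecov Ediam] <-] Hsum].
set term := fun i => (if E i == set0 then 0 else eucl_diam (E i) ^+ d').
have term0 i : 0 <= term i.
  by rewrite /term; case: ifP => // _; apply: expe_ge0; exact: diam_ge0.
set LipK := fun omega => forall w1 w2, W w1 -> W w2 ->
       (eucl_dist (g w1 omega) (g w2 omega) <= K%:R * eucl_dist w1 w2)%R.
have HB : forall i, exists B : set T, measurable B /\ P B <= c'%:E * term i /\
   (forall omega w, W w -> U (cat_tuple w (g w omega)) -> LipK omega ->
      E i (cat_tuple w (g w omega)) -> B omega).
  move=> i.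
  case: (pselect (exists w v, W w /\ U (cat_tuple w v) /\ E i (cat_tuple w v))); last first.
    move=> Hno; exists set0; split => //; split.
      by rewrite measure0; apply: mule_ge0 => //; rewrite lee_fin ltW.
    by move=> omega w Ww Uw _ Ez; apply: Hno; exists w, (g w omega).
  move=> [wi [vi [Wwi [Ui Ei]]]].
  have En0 : (E i == set0) = false.
    by apply/negbTE/eqP => E0; rewrite E0 in Ei.
  have diam0 := diam_ge0 (E i).
  have Dfin : eucl_diam (E i) \is a fin_num.
    rewrite ge0_fin_numE //; apply: le_lt_trans (Ediam i) _; exact: ltry.
  set D := fine (eucl_diam (E i)).
  have HD : eucl_diam (E i) = D%:E by rewrite fineK.
  have D0 : (0 <= D)%R by rewrite -lee_fin -HD.
  have Ddelta : (D <= delta)%R by rewrite -lee_fin -HD; exact: Ediam.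
  set s := ((K%:R + 1) * D)%R.
  have s0' : (0 <= s)%R by rewrite mulr_ge0 // addr_ge0.
  have ss0 : (s <= s0)%R.
    rewrite /s (_ : s0 = (K%:R + 1) * delta)%R; last first.
      by rewrite /delta mulrC -mulrA mulVf ?mulr1 // gt_eqF // ltr_wpDl.
    by rewrite ler_wpM2l // addr_ge0.
  have Hsrho : (d'%:R * s ^+ 2 < rho ^+ 2)%R.
    have rhoE : rho = (s0 * (d'%:R + 1))%R.
      by rewrite /s0 -mulrA mulVf ?mulr1 // gt_eqF // ltr_wpDl.
    have q0 : (0 <= d'%:R :> R)%R by [].
    have a1 : (s ^+ 2 <= s0 ^+ 2)%R by rewrite lerXn2r // ?nnegrE // ltW.
    have a2 : (d'%:R * s ^+ 2 <= d'%:R * s0 ^+ 2)%R by rewrite ler_wpM2l.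
    have a3 : (0 < s0 ^+ 2)%R by rewrite exprn_gt0.
    have a4 : (0 <= d'%:R * s0 ^+ 2)%R by rewrite mulr_ge0 // ltW.
    have rho2 : (rho ^+ 2 = s0 ^+ 2 * (d'%:R + 1) ^+ 2)%R by rewrite -exprMn -rhoE.
    apply: le_lt_trans a2 _; rewrite rho2.
    rewrite (_ : (d'%:R + 1) ^+ 2 = d'%:R * d'%:R + d'%:R + d'%:R + 1)%R; last by ring.
    rewrite !mulrDr mulr1 [X in (X < _)%R]mulrC.
    have a5 : (0 <= s0 ^+ 2 * (d'%:R * d'%:R))%R by rewrite mulr_ge0 // ?mulr_ge0 // ltW.
    lra.
  exists (g wi @^-1` tbox vi s); split.
    by rewrite -[X in measurable X]setTI; apply: mg => //; exact: measurable_tbox.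
  split.
    have [f [mf [fb Hf]]] := dens wi vi Wwi Ui.
    rewrite Hf; last 2 first.
    - exact: measurable_tbox.
    - by move=> x Hx; apply: box_in_ball rho0 s0' Hsrho Hx.
    apply: le_trans (iter_bound (c := C) (v := vi) (s := s) _ _ _ _) _.
    - exact: ltW.
    - exact: s0'.
    - by move=> x; rewrite lee_fin indicE; apply: mulr_ge0 => //; case/andP: (fb x).
    - move=> x; rewrite indicE; case: (pselect (tbox vi s x)) => Hx.
        rewrite mem_set // mul1r.
        have -> : [forall j, `|tnth x j - tnth vi j| <= s]%R = true.
          by apply/forallP => j; exact: Hx.
        by rewrite lee_fin; case/andP: (fb x).
      rewrite memNset // mul0r; case: ifP => _; rewrite lee_fin //; exact: ltW.
    rewrite /term En0 HD -EFin_expe -EFinM lee_fin /c' /s.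
    by rewrite -mulrA -exprMn mulrA.
  move=> omega w Ww Uw Lw Ez j.
  have Hz : (eucl_dist (cat_tuple w (g w omega)) (cat_tuple wi vi) <= D)%R.
    by rewrite -lee_fin -HD; apply: dist_le_diam.
  have h1' := le_trans (dist_cat_l w wi (g w omega) vi) Hz.
  have h2 := le_trans (dist_cat_r w wi (g w omega) vi) Hz.
  have h3 := Lw wi w Wwi Ww.
  have h4 : (K%:R * eucl_dist wi w <= K%:R * D)%R.
    by rewrite ler_wpM2l // dist_sym.
  have h5 := ler_distD (tnth (g w omega) j) (tnth (g wi omega) j) (tnth vi j).
  have h6 := coord_le_dist (g wi omega) (g w omega) j.
  have h7 := coord_le_dist (g w omega) vi j.
  rewrite /s; lra.
have [B HBf] := choice HB.
have mB i : measurable (B i) by case: (HBf i).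
exists (\bigcup_i B i); split; first exact: bigcupT_measurable.
split.
  move=> omega [w [Ww [Uw Lw]]].
  have [i _ Ei] := Ecov _ Uw.
  exists i => //; case: (HBf i) => _ [_ H]; exact: H omega w Ww Uw Lw Ei.
have mN : measurable (\bigcup_i B i) by exact: bigcupT_measurable.
apply: le_trans (measure_sigma_subadditive P mB mN (@subset_refl _ _)) _.
apply: le_trans (lee_nneseries (v := fun i => c'%:E * term i) _ _) _.
- by move=> i _ _.
- by move=> i _; case: (HBf i) => _ [].
rewrite nneseriesZl; last by move=> i _; exact: term0.
apply: le_trans (lee_pmul _ _ (lexx _) (ltW Hsum)) _.
- by rewrite lee_fin ltW.
- by apply: nneseries_ge0 => i _ _; exact: term0.
by rewrite -EFinM lee_fin mulrCA mulfV ?mulr1 // gt_eqF.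
Qed.
End Key.

Unset Implicit Arguments. Set Strict Implicit.

Theorem lemma2p6 (R : realType) (dT : measure_display) (T : measurableType dT)
  (P : probability T R) (d d' : nat)
  (U : set ((d + d').-tuple R)) (W : set (d.-tuple R))
  (g : d.-tuple R -> T -> d'.-tuple R) (C rho : R) :
  measurable U -> measurable W ->
  (* g is a stochastic process: each g(w) is a random variable *)
  (forall w, W w -> measurable_fun [set: T] (g w)) ->
  (* Lipschitz-continuous sample paths *)
  (forall omega, exists L : R, forall w1 w2, W w1 -> W w2 ->
       eucl_dist (g w1 omega) (g w2 omega) <= L * eucl_dist w1 w2) ->
  0 < C -> 0 < rho ->
  (* local bounded density of the law of g(w) near v, for (w,v) in U *)
  (forall w v, W w -> U (cat_tuple w v) ->
     exists f : d'.-tuple R -> R,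
       measurable_fun [set: d'.-tuple R] f /\
       (forall x, 0 <= f x <= C) /\
       (forall A : set (d'.-tuple R), measurable A -> A `<=` eucl_ball v rho ->
          P (g w @^-1` A) =
          iter_lebesgue_integral (fun x => (\1_A x * f x)%:E))) ->
  hausdorff_measure d' U = 0%E ->
  P.-negligible [set omega | exists w, W w /\ U (cat_tuple w (g w omega))].
Proof.
move=> mU mW mg Lip C0 rho0 dens HU.
apply: (negligibleS _ (negligible_bigcup (fun K => key K mg C0 rho0 dens HU))).
move=> omega [w [Ww Uw]].
have [L HL] := Lip omega.
exists (Num.truncn `|L|).+1 => //.
exists w; split => //; split => // w1 w2 W1 W2.
apply: le_trans (HL w1 w2 W1 W2) _.
apply: ler_wpM2r; first exact: dist_ge0.
apply: le_trans (ler_norm L) _.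
exact: ltW (Num.Theory.truncnS_gt _).
Qed.
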